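(* Let $\mathcal{C}=\mathcal{I}_i$ be an irreducible $\lambda$-constacyclic code of length $n$ and dimension $k$ over $\mathbb{F}_q$ corresponding to the $q$-cyclotomic coset $C_{1+t\alpha_i}$ (so $k=d_i$). Then $$N_{\langle\rho,M\rangle}(\mathcal{C}^{*})=\frac{(q^k-1)\gcd\big((q-1)(1+t\alpha_i),\,tn\big)}{(q-1)tn}.$$ Moreover, the number of distinct nonzero Hamming weights of $\mathcal{C}$ is at most $N_{\langle\rho,M\rangle}(\mathcal{C}^{*})$, with equality if and only if for any two nonzero codewords $c_1,c_2\in\mathcal{C}$ of the same Hamming weight there exist an integer $j$ and $b\in\mathbb{F}_q^{*}$ with $\rho^{j}(bc_1)=c_2$.
   Context: Standing setup: $q$ is a prime power, $n$ a positive integer with $\gcd(n,q)=1$, $\lambda\in\mathbb{F}_q^{*}$ has multiplicative order $t$ (so $t\mid q-1$). $\mathcal{R}=\mathbb{F}_q[x]/\langle x^n-\lambda\rangle$; vectors in $\mathbb{F}_q^n$ are identified with polynomials of degree $<n$, and a $\lambda$-constacyclic code of length $n$ is an ideal of $\mathcal{R}$. Let $\zeta$ be a primitive $tn$-th root of unity in an extension $\mathbb{F}_{q^m}$ with $\zeta^n=\lambda$. The set $\mathcal{S}=\{1+ti:0\le i\le n-1\}$ (residues mod $tn$) is partitioned into the distinct $q$-cyclotomic cosets modulo $tn$, $C_{1+t\alpha_j}=\{(1+t\alpha_j)q^{h}\bmod tn: h\ge 0\}$, $j=0,\dots,s$, with $0=\alpha_0<\dots<\alpha_s\le n-1$ and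 $d_j=|C_{1+t\alpha_j}|$. Let $m_j(x)=\prod_{h\in C_{1+t\alpha_j}}(x-\zeta^{h})$, and let $\mathcal{I}_j$ be the ideal of $\mathcal{R}$ generated by $(x^n-\lambda)/m_j(x)$ (the irreducible $\lambda$-constacyclic code of dimension $d_j$ corresponding to $C_{1+t\alpha_j}$). The cyclic shift $\rho$ is $\rho(c(x))=xc(x)$ in $\mathcal{R}$, i.e. $(c_0,\dots,c_{n-1})\mapsto(\lambda c_{n-1},c_0,\dots,c_{n-2})$; $\langle\rho\rangle$ has order $tn$. For $b\in\mathbb{F}_q^{*}$, $\sigma_b(c)=bc$ (scalar multiplication), $M=\{\sigma_b:b\in\mathbb{F}_q^{*}\}$, and $\langle\rho,M\rangle$ is the group of $\mathbb{F}_q$-linear maps generated by $\rho$ and $M$ (it equals $\langle\rho\rangle\times M$, of order $tn(q-1)$). $\mathcal{C}^{*}=\mathcal{C}\setminus\{0\}$, and $N_G(X)$ is the number of orbits of a group $G$ acting on $X$. *)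

(* Defs.v *)
From HB Require Import structures.
From mathcomp Require Import all_boot all_order all_algebra all_fingroup all_field.
From mathcomp Require Import boolp.
Set Implicit Arguments. Unset Strict Implicit. Unset Printing Implicit Defensive.
Import GRing.Theory.
Local Open Scope ring_scope.

Section Defs.
Variable F : finFieldType.
Variable n : nat.

Definition wt (c : 'rV[F]_n) : nat := #|[set i : 'I_n | c 0 i != 0]|.

(* constacyclic shift rho : (c_0,...,c_{n-1}) |-> (lam c_{n-1}, c_0, ..., c_{n-2}) *)
Definition rho (lam : F) (c : 'rV[F]_n) : 'rV[F]_n :=
  \row_(i < n) ((if val i == 0%N then lam else 1) * c 0 (ord_pred i)).

Lemma rho_inj (lam : {unit F}) : injective (rho (val lam)).
Proof.
move=> c d /rowP H; apply/rowP => j.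
have := H (ordS j); rewrite !mxE ordSK.
case: (_ == _); last by rewrite !mul1r.
by apply: mulrI; exact: (valP lam).
Qed.

Definition rho_perm (lam : {unit F}) : {perm 'rV[F]_n} := perm (@rho_inj lam).

Lemma sigma_inj (b : {unit F}) : injective (fun c : 'rV[F]_n => val b *: c).
Proof. by move=> c d; apply: scalerI; rewrite -unitfE; exact: (valP b). Qed.

Definition sigma_perm (b : {unit F}) : {perm 'rV[F]_n} := perm (@sigma_inj b).

Definition rhoM_group (lam : {unit F}) : {group {perm 'rV[F]_n}} :=
  <<rho_perm lam |: [set sigma_perm b | b : {unit F}]>>%G.

Definition in_cyc (N q r x : nat) : bool :=
  [exists h : 'I_N.+1, x == (r * q ^ h) %% N]%N.

Definition cyc_coset (N q r : nat) : {set 'I_N} := [set x : 'I_N | in_cyc N q r x].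

Definition min_poly_coset (L : fieldExtType F) (zeta : L) (N q r : nat) : {poly L} :=
  \prod_(h in cyc_coset N q r) ('X - (zeta ^+ h)%:P).

Definition gen_poly_L (L : fieldExtType F) (zeta : L) (lam : F) (N q r : nat) : {poly L} :=
  ('X^n - (lam%:A)%:P) %/ min_poly_coset zeta N q r.

(* the ideal of R = F[x]/<x^n - lam> generated by g, as a set of vectors
   (vectors identified with polynomials of degree < n via rVpoly) *)
Definition ideal_gen (lam : F) (g : {poly F}) : {set 'rV[F]_n} :=
  [set c : 'rV[F]_n | `[< exists a : {poly F}, rVpoly c = (a * g) %% ('X^n - lam%:P) >] ].

End Defs.

(* Main.v *)
Require Import Defs.
From HB Require Import structures.
From mathcomp Require Import all_boot all_order all_algebra all_fingroup all_field.
From mathcomp Require Import boolp zify ring.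
From mathcomp Require Import pgroup abelian.
Set Implicit Arguments. Unset Strict Implicit. Unset Printing Implicit Defensive.
Import GRing.Theory.
Local Open Scope ring_scope.

Local Open Scope nat_scope.
Lemma count_cong (N w j : nat) : 0 < N ->
  #|[set i : 'I_N | i * w == j * w %[mod N]]| = gcdn w N.
Proof.
move=> N0.
set gg := gcdn w N.
have gg0 : 0 < gg by rewrite gcdn_gt0 N0 orbT.
set N' := N %/ gg; set w' := w %/ gg.
have eN : N = N' * gg by rewrite divnK // dvdn_gcdr.
have ew : w = w' * gg by rewrite divnK // dvdn_gcdl.
have N'0 : 0 < N' by move: N0; rewrite eN muln_gt0 => /andP[].
have cop : coprime N' w'.
  rewrite /coprime; apply/eqP; apply/eqP; rewrite -(eqn_pmul2r gg0) mul1n.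
  by rewrite muln_gcdl -eN -ew gcdnC.
have key0 a b : a <= b -> (b * w == a * w %[mod N]) = (b == a %[mod N']).
  move=> ab; rewrite eqn_mod_dvd ?leq_mul2r ?ab ?orbT // eqn_mod_dvd //.
  by rewrite -mulnBl {1}eN ew mulnA dvdn_pmul2r // Gauss_dvdl.
have key i : (i * w == j * w %[mod N]) = (i == j %[mod N']).
  case: (leqP j i) => [ji|/ltnW ij]; first exact: key0.
  by rewrite eq_sym key0 // eq_sym.
have ltx (x : 'I_gg) : j %% N' + x * N' < N.
  have := ltn_pmod j N'0; have := ltn_ord x; rewrite eN => xg jN.
  have : (x.+1 * N' <= gg * N') by rewrite leq_mul2r xg orbT.
  rewrite mulSn; lia.
pose h (x : 'I_gg) : 'I_N := Ordinal (ltx x).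
have -> : [set i : 'I_N | i * w == j * w %[mod N]] = h @: setT.
  apply/setP => i; rewrite inE key; apply/idP/imsetP.
    move=> /eqP ij; have xl : i %/ N' < gg by rewrite ltn_divLR // mulnC -eN.
    exists (Ordinal xl); rewrite ?inE //; apply: val_inj => /=.
    by rewrite -ij addnC -divn_eq.
  case=> x _ -> /=; apply/eqP; rewrite addnC modnMDl modn_mod //.
rewrite card_imset ?cardsT ?card_ord // => x y /(congr1 val) /= /eqP.
by rewrite eqn_add2l eqn_pmul2r // => /eqP /val_inj.
Qed.
Local Open Scope ring_scope.

Section Main.
Variables (F : finFieldType) (n t : nat) (lam : {unit F}) (alpha : nat)
    (L : fieldExtType F) (zeta : L) (g : {poly F}).
Hypotheses (n0 : (0 < n)%N) (t0 : (0 < t)%N) (lprim : t.-primitive_root (val lam))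
  (zprim : (t * n)%N.-primitive_root zeta) (zn : zeta ^+ n = (val lam)%:A).
Let l := val lam.
Let N0 := (t * n)%N.
Let q := #|F|.
Let u := (1 + t * alpha)%N.
Let S := cyc_coset N0 q u.
Let k := #|S|.
Let th := zeta ^+ u.
Let f : {poly F} := 'X^n - l%:P.
Let m := min_poly_coset zeta N0 q u.
Let G := gen_poly_L n zeta l N0 q u.
Hypothesis gdef : map_poly (in_alg L) g = G.

Lemma N0_gt0 : (0 < N0)%N. Proof. by rewrite muln_gt0 t0 n0. Qed.

Lemma l_neq0 : l != 0. Proof. by rewrite -unitfE; exact: (valP lam). Qed.
Lemma lt1 : l ^+ t = 1. Proof. exact: prim_expr_order lprim. Qed.
Lemma lu : l ^+ u = l. Proof. by rewrite /u exprD expr1 exprM lt1 expr1n mulr1. Qed.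
Lemma fin_pow (x : F) e : x ^+ (q ^ e) = x.
Proof. elim: e => [|e IH]; first by rewrite expn0 expr1.
by rewrite expnSr exprM IH expf_card. Qed.

Lemma thn : th ^+ n = l%:A.
Proof. by rewrite /th -exprM mulnC exprM zn exprZn expr1n lu. Qed.

Lemma zN0 : zeta ^+ N0 = 1. Proof. exact: prim_expr_order zprim. Qed.

Lemma coset_conj (h : nat) : in_cyc N0 q u h -> exists e, zeta ^+ h = th ^+ (q ^ e).
Proof.
case/existsP => e /eqP ->; exists e.
by rewrite (expr_mod _ zN0) /th -exprM.
Qed.

Lemma fL : map_poly (in_alg L) f = 'X^n - (l%:A)%:P.
Proof. by rewrite /f rmorphB /= map_polyXn map_polyC. Qed.

Lemma thq_root e : root ('X^n - (l%:A)%:P) (th ^+ (q ^ e)).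
Proof.
rewrite rootE !hornerE -exprM mulnC exprM thn exprZn expr1n fin_pow subrr eqxx.
by [].
Qed.

Let rs := [seq zeta ^+ (val h) | h <- enum S].

Lemma m_eq : m = \prod_(z <- rs) ('X - z%:P).
Proof. by rewrite /m /min_poly_coset big_map big_enum. Qed.

Lemma zeta_inj (i j : nat) : (i < N0)%N -> (j < N0)%N -> zeta ^+ i = zeta ^+ j -> i = j.
Proof.
move=> iN jN /eqP; rewrite (eq_prim_root_expr zprim) !modn_small //; exact/eqP.
Qed.

Lemma rs_uniq : uniq rs.
Proof.
rewrite map_inj_in_uniq ?enum_uniq // => h1 h2 _ _ /zeta_inj E.
by apply: val_inj; apply: E; apply: ltn_ord.
Qed.

Lemma rs_conj z : z \in rs -> exists e, z = th ^+ (q ^ e).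
Proof.
case/mapP => h; rewrite mem_enum inE => hS ->; exact: coset_conj.
Qed.

Lemma m_dvd : m %| 'X^n - (l%:A)%:P.
Proof.
rewrite m_eq; apply: uniq_roots_dvdp; last by rewrite uniq_rootsE rs_uniq.
by apply/allP => z /rs_conj [e ->]; apply: thq_root.
Qed.

Lemma size_m : size m = k.+1.
Proof. by rewrite m_eq size_prod_XsubC size_map -cardE. Qed.

Lemma fL_neq0 : 'X^n - (l%:A)%:P != 0 :> {poly L}.
Proof. by rewrite -size_poly_eq0 size_XnsubC. Qed.

Lemma Gm : G * m = 'X^n - (l%:A)%:P.
Proof. by rewrite /G /gen_poly_L divpK ?m_dvd. Qed.

Lemma G_neq0 : G != 0.
Proof. by apply: contraNneq fL_neq0 => G0; rewrite -Gm G0 mul0r. Qed.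

Lemma m_neq0 : m != 0.
Proof. by rewrite -size_poly_eq0 size_m. Qed.

Lemma size_G : (size G + k = n.+1)%N.
Proof.
have := congr1 (fun p : {poly L} => size p) Gm => /=; rewrite size_mul ?G_neq0 ?m_neq0 // size_m size_XnsubC //.
by rewrite addnS.
Qed.

Lemma size_g : size g = size G.
Proof. by rewrite -gdef size_map_poly. Qed.

Lemma g_neq0 : g != 0.
Proof. by rewrite -size_poly_eq0 size_g size_poly_eq0 G_neq0. Qed.

Lemma g_dvd : g %| f.
Proof. by rewrite -(dvdp_map (in_alg L)) gdef fL -Gm dvdp_mulr. Qed.

Lemma k_le : (k <= n)%N.
Proof. have := size_G; have := size_poly_gt0 G; rewrite G_neq0; lia. Qed.

Lemma q_pnat : [pchar L].-nat q.
Proof.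
have [p pp pF] := finPcharP F.
have : p.-nat q by have := abelem_pgroup (fin_ring_pchar_abelem pF); rewrite /pgroup cardsT.
have pL : p \in [pchar L] by rewrite pchar_lalg.
by rewrite (eq_pnat _ (pcharf_eq pL)).
Qed.

Lemma q_gt0 : (0 < q)%N. Proof. by rewrite /q; case: #|F| (finNzRing_gt1 F). Qed.

Lemma frobD (x y : L) : (x + y) ^+ q = x ^+ q + y ^+ q.
Proof. exact: exprDn_pchar q_pnat. Qed.

Lemma horner_frob (P : {poly F}) (x : L) :
  (map_poly (in_alg L) P).[x] ^+ q = (map_poly (in_alg L) P).[x ^+ q].
Proof.
have e0 : 0 ^+ q = 0 :> L by rewrite expr0n; case: q q_gt0.
rewrite !horner_coef.
rewrite (big_morph (fun y : L => y ^+ q) frobD e0).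
apply: eq_bigr => i _; rewrite exprMn -!exprM mulnC coef_map /=.
by rewrite exprZn expr1n expf_card.
Qed.

Lemma horner_frobn (P : {poly F}) (x : L) e :
  (map_poly (in_alg L) P).[x] ^+ (q ^ e) = (map_poly (in_alg L) P).[x ^+ (q ^ e)].
Proof.
elim: e => [|e IH]; first by rewrite !expn0 !expr1.
by rewrite expnSr !exprM IH horner_frob.
Qed.

Let C := ideal_gen n l g.
Definition evx (c : 'rV[F]_n) (x : L) := (map_poly (in_alg L) (rVpoly c)).[x].

Lemma C_vanish c r : c \in C -> root ('X^n - (l%:A)%:P) r -> ~~ root m r -> evx c r = 0.
Proof.
rewrite inE => /asboolP [a ha] rr nrm.
have Gr : G.[r] = 0.
  by move: rr; rewrite -Gm rootM (negbTE nrm) orbF => /eqP.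
rewrite /evx ha.
have -> : (a * g) %% f = a * g - (a * g %/ f) * f by rewrite {2}(divp_eq (a * g) f) addrAC subrr add0r.
rewrite rmorphB !rmorphM /= gdef fL !hornerE Gr.
move: rr; rewrite rootE !hornerE => /eqP ->; rewrite !mulr0 ?subr0 oppr0.
by [].
Qed.

Let R := [seq zeta ^+ (1 + t * i) | i <- iota 0 n].

Lemma R_uniq : uniq R.
Proof.
rewrite map_inj_in_uniq ?iota_uniq // => i j; rewrite !mem_iota !add0n.
move=> /andP[_ iN] /andP[_ jN] /eqP; rewrite (eq_prim_root_expr zprim) eqn_modDl.
rewrite -!muln_modr !modn_small // eqn_mul2l (negbTE (lt0n_neq0 t0)) /=; exact/eqP.
Qed.

Lemma R_root r : r \in R -> root ('X^n - (l%:A)%:P) r.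
Proof.
case/mapP => i _ ->; rewrite rootE !hornerE -exprM mulnDl mul1n exprD zn -/l.
by rewrite mulnAC exprM zN0 expr1n mulr1 subrr.
Qed.

Lemma size_rVpoly (c : 'rV[F]_n) : (size (rVpoly c) <= n)%N.
Proof. exact: size_poly. Qed.

Lemma ev_inj c d : c \in C -> d \in C -> evx c th = evx d th -> c = d.
Proof.
move=> cC dC E.
pose D := map_poly (in_alg L) (rVpoly c - rVpoly d).
have Dx x : D.[x] = evx c x - evx d x by rewrite /D /evx rmorphB /= hornerD hornerN.
have : D = 0.
  apply: (roots_geq_poly_eq0 _ R_uniq); last first.
    by rewrite size_map size_iota /D size_map_poly (leq_trans (size_polyD _ _)) // geq_max size_polyN !size_rVpoly.
  apply/allP => r rR; rewrite rootE.
  have [rm|nrm] := boolP (root m r).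
    move: rm; rewrite m_eq root_prod_XsubC => /rs_conj [e ->].
    rewrite /D -horner_frobn -/D Dx E subrr.
    by rewrite expr0n expn_eq0; case: q q_gt0.
  by rewrite Dx !C_vanish ?R_root // subrr.
rewrite /D => /eqP; rewrite map_poly_eq0 subr_eq0 => /eqP.
exact: (can_inj rVpolyK).
Qed.

Lemma rho_poly (c : 'rV[F]_n) : rVpoly (rho l c) = 'X * rVpoly c - ((rVpoly c)`_n.-1)%:P * f.
Proof.
have cv (v : 'rV[F]_n) (j : 'I_n) : v 0 j = (rVpoly v)`_j by rewrite coef_rVpoly_ord.
apply/polyP => i.
rewrite coefB coefXM coefCM /f coefB coefXn coefC coef_rVpoly.
case: insubP => [j ji <-|ni].
  rewrite mxE (cv c (ord_pred j)) /=.
  case: j ji => [[|j'] ltj] /= _.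
    rewrite add0n modn_small; last by rewrite prednK.
    have -> : (0 == n)%N = false by case: n n0 {c cv}.
    by rewrite !sub0r mulrN opprK mulrC.
  rewrite modnDr modn_small; last by apply: ltn_trans ltj.
  have -> : (j'.+1 == n)%N = false by apply/negbTE; rewrite neq_ltn ltj.
  by rewrite mul1r subr0 mulr0 subr0.
have i0 : (i == 0)%N = false by apply: contraNF ni => /eqP ->.
rewrite i0 subr0.
have [->|ne] := eqVneq i n; first by rewrite mulr1 subrr.
have -> : (rVpoly c)`_i.-1 = 0.
  apply: nth_default; apply: leq_trans (size_rVpoly c) _.
  move: ni ne i0; rewrite -leqNgt; case: i => // i' /= ? ? _; lia.
by rewrite mulr0 subr0.
Qed.

Lemma size_f : size f = n.+1. Proof. exact: size_XnsubC. Qed.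

Lemma ev_rho c : evx (rho l c) th = th * evx c th.
Proof.
rewrite /evx rho_poly rmorphB !rmorphM /= map_polyX map_polyC fL !hornerE thn.
by rewrite subrr mulr0 subr0.
Qed.

Lemma ev_scale b c : evx (b *: c) th = b%:A * evx c th.
Proof. by rewrite /evx linearZ /= map_polyZ hornerZ. Qed.

Lemma C0 : 0 \in C.
Proof. by rewrite inE; apply/asboolP; exists 0; rewrite linear0 mul0r mod0p. Qed.

Lemma C_rho c : c \in C -> rho l c \in C.
Proof.
rewrite !inE => /asboolP [a ha]; apply/asboolP; exists ('X * a).
have E : 'X * rVpoly c = ((rVpoly c)`_n.-1)%:P * f + rVpoly (rho l c).
  by rewrite rho_poly addrC subrK.
rewrite -[rVpoly (rho l c)](modp_addl_mul_small (d := f) ((rVpoly c)`_n.-1)%:P); last first.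
  by rewrite size_f ltnS size_rVpoly.
by rewrite -E ha modp_mul mulrA.
Qed.

Lemma C_scale b c : c \in C -> b *: c \in C.
Proof.
rewrite !inE => /asboolP [a ha]; apply/asboolP; exists (b%:P * a).
by rewrite linearZ /= ha -modpZl mul_polyC scalerAl.
Qed.

Lemma C_iter j b c : c \in C -> iter j (rho l) (b *: c) \in C.
Proof. by move=> cC; elim: j => [|j IH] /=; [apply: C_scale | apply: C_rho]. Qed.

Lemma ev_iter j b c : evx (iter j (rho l) (b *: c)) th = th ^+ j * b%:A * evx c th.
Proof.
elim: j => [|j IH] /=; first by rewrite expr0 mul1r ev_scale.
by rewrite ev_rho IH exprS !mulrA.
Qed.

Definition phiC (b : 'rV[F]_k) : 'rV[F]_n := poly_rV (rVpoly b * g).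

Lemma size_bg (B : {poly F}) : (size B <= k)%N -> (size (B * g)%R <= n)%N.
Proof.
move=> sB; apply: leq_trans (size_polyMleq _ _) _.
have := size_G; rewrite -size_g; lia.
Qed.

Lemma C_eq : C = phiC @: setT.
Proof.
apply/setP => c; apply/idP/idP.
  rewrite inE => /asboolP [a ha].
  have fhg : f = f %/ g * g by rewrite divpK // g_dvd.
  pose B := a - (a * g %/ f) * (f %/ g).
  have E : rVpoly c = B * g.
    rewrite ha /B mulrBl -mulrA -fhg.
    by rewrite {2}(divp_eq (a * g) f) addrAC subrr add0r.
  have sB : (size B <= k)%N.
    have [->|B0] := eqVneq B 0; first by rewrite size_poly0.
    have := size_rVpoly c; rewrite E size_mul // ?g_neq0 //.
    have := size_G; rewrite -size_g => H1; rewrite -subn1 leq_subLR; set x1 := size g in H1 *; set x2 := size B in H1 *; lia.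
  apply/imsetP; exists (poly_rV B); rewrite ?inE //.
  by rewrite /phiC poly_rV_K // -E rVpolyK.
case/imsetP => b _ ->; rewrite inE; apply/asboolP; exists (rVpoly b).
rewrite /phiC poly_rV_K ?size_bg ?size_poly // modp_small // size_f ltnS.
by rewrite size_bg ?size_poly.
Qed.

Lemma card_C : #|C| = (q ^ k)%N.
Proof.
rewrite C_eq card_imset ?cardsT ?card_mx ?mul1n //.
move=> b1 b2 /(congr1 rVpoly); rewrite /phiC !poly_rV_K ?size_bg ?size_poly //.
by move/(mulIf g_neq0)/(can_inj rVpolyK).
Qed.

Let q1 := q.-1.
Lemma q1S : q1.+1 = q. Proof. by rewrite /q1 prednK // q_gt0. Qed.
Lemma q1_gt0 : (0 < q1)%N. Proof. by rewrite /q1 -subn1 subn_gt0 finNzRing_gt1. Qed.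

Lemma unitF (b : F) : b != 0 -> b ^+ q1 = 1.
Proof.
move=> b0; apply: (mulfI b0); rewrite mulr1 -exprS q1S; exact: expf_card.
Qed.

Lemma in_F (x : L) : x ^+ q1 = 1 -> exists b : F, x = b%:A.
Proof.
move=> xq.
have [/existsP[b /eqP ->]|nx] := boolP [exists b : F, x == b%:A]; first by exists b.
exfalso.
pose rs0 := [seq b%:A | b <- enum [set b : F | b != 0]] : seq L.
have := @max_poly_roots _ ('X^q1 - 1%:P) (x :: rs0).
rewrite -size_poly_eq0 size_XnsubC ?q1_gt0 //= size_map -cardE.
have cq : #|[set b : F | b != 0]| = q1.
  by rewrite -[q1](cardC1 (0:F)); apply: eq_card => b; rewrite inE.
rewrite cq ltnn => /(_ isT) H.
have h1 : root ('X^q1 - 1%:P) x && all (root ('X^q1 - 1%:P)) rs0.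
  apply/andP; split; first by rewrite rootE !hornerE xq subrr.
  apply/allP => z /mapP [b]; rewrite mem_enum inE => b0 ->.
  rewrite rootE !hornerE.
  have -> : b%:A ^+ q1 = (b ^+ q1)%:A :> L by rewrite -!in_algE -rmorphXn.
  by rewrite unitF // scale1r subrr.
have h2 : (x \notin rs0) && uniq rs0.
  apply/andP; split.
    apply/negP => /mapP [b _ xb]; move/existsP: nx; apply; exists b; apply/eqP.
    exact xb.
  rewrite map_inj_uniq ?enum_uniq //; move=> b1 b2; rewrite -!in_algE; exact: fmorph_inj.
by have := H h1 h2.
Qed.

Let w := (q1 * u)%N.

Lemma zeta_neq0 : zeta != 0.
Proof.
apply/eqP => z0; have := zN0; rewrite z0 expr0n.
by rewrite eqn0Ngt N0_gt0 /= => /eqP; rewrite eq_sym oner_eq0.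
Qed.

Lemma th_neq0 : th != 0. Proof. by rewrite /th expf_neq0 // zeta_neq0. Qed.

Lemma thq (i : nat) : (th ^+ i) ^+ q1 = zeta ^+ (i * w).
Proof. by rewrite /th -!exprM; congr (zeta ^+ _); rewrite /w; nia. Qed.

Lemma inA_q1 (b : F) : b != 0 -> (b%:A) ^+ q1 = 1 :> L.
Proof. by move=> b0; rewrite -!in_algE -rmorphXn unitF // rmorph1. Qed.

Lemma inA_neq0 (b : F) : b != 0 -> (b%:A) != 0 :> L.
Proof. by move=> b0; rewrite -in_algE fmorph_eq0. Qed.

Lemma fiber_cond i j (b : F) : b != 0 ->
  (exists2 b' : F, b' != 0 & th ^+ i * b'%:A = th ^+ j * b%:A) <->
  (i * w == j * w %[mod N0])%N.
Proof.
move=> b0; split.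
  case=> b' b'0 E.
  have := congr1 (fun z => z ^+ q1) E; rewrite /= !exprMn !thq !inA_q1 // !mulr1.
  by move/eqP; rewrite (eq_prim_root_expr zprim).
move=> H; have E : zeta ^+ (i * w) = zeta ^+ (j * w).
  by apply/eqP; rewrite (eq_prim_root_expr zprim).
pose y := th ^+ j * b%:A / th ^+ i.
have thi0 : th ^+ i != 0 by rewrite expf_neq0 // th_neq0.
have y1 : y ^+ q1 = 1.
  rewrite /y expr_div_n exprMn !thq inA_q1 // mulr1 E divff //.
  by rewrite expf_neq0 // zeta_neq0.
have [b' yb'] := in_F y1.
have y0 : y != 0.
  by rewrite /y mulf_neq0 ?invr_neq0 ?mulf_neq0 ?inA_neq0 ?thi0 // expf_neq0 // th_neq0.
exists b'; first by apply: contraNneq y0 => b'0; rewrite yb' b'0 scale0r.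
by rewrite -yb' /y mulrC divfK.
Qed.

Let A := [set jb : 'I_N0 * F | jb.2 != 0].
Definition Phi (c : 'rV[F]_n) (jb : 'I_N0 * F) := iter jb.1 (rho l) (jb.2 *: c).
Let gg := gcdn w N0.

Lemma cardF0 : #|[set b : F | b != 0]| = q1.
Proof. by rewrite -[q1](cardC1 (0:F)); apply: eq_card => b; rewrite inE. Qed.

Lemma card_A : #|A| = (N0 * q1)%N.
Proof.
have -> : A = setX [set: 'I_N0] [set b : F | b != 0] by apply/setP => -[i b]; rewrite !inE.
by rewrite cardsX cardsT card_ord cardF0.
Qed.

Lemma ev0 : evx 0 th = 0.
Proof. by rewrite /evx linear0 rmorph0 horner0. Qed.

Lemma evc0 c : c \in C -> c != 0 -> evx c th != 0.
Proof.
move=> cC c0; apply/eqP => E; move/eqP: c0; apply.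
by apply: ev_inj cC C0 _; rewrite E ev0.
Qed.

Lemma Phi_eq c x y : c \in C -> c != 0 ->
  (Phi c x == Phi c y) = (th ^+ x.1 * x.2%:A == th ^+ y.1 * y.2%:A).
Proof.
move=> cC c0; apply/eqP/eqP => E.
  have := congr1 (fun v => evx v th) E; rewrite /Phi /= !ev_iter.
  by move/(mulIf (evc0 cC c0)).
by apply: ev_inj; rewrite ?C_iter // !ev_iter E.
Qed.

Lemma fiber_card c y : c \in C -> c != 0 -> y \in A ->
  #|[set x in A | Phi c x == Phi c y]| = gg.
Proof.
move=> cC c0 yA.
have y0 : y.2 != 0 by move: yA; rewrite inE.
rewrite -(card_in_imset (f := fst)); last first.
  move=> [i1 b1] [i2 b2]; rewrite !inE !Phi_eq //= => /andP[_ /eqP E1] /andP[_ /eqP E2] ei.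
  move: ei => /= ei; subst i2.
  have : th ^+ i1 * b1%:A = th ^+ i1 * b2%:A by rewrite E1 E2.
  move/(mulfI (expf_neq0 _ th_neq0)).
  by rewrite -!in_algE => /fmorph_inj ->.
rewrite /gg -(@count_cong N0 w y.1 N0_gt0); apply: eq_card => i; rewrite [in RHS]inE.
apply/imsetP/idP.
  case=> -[j b]; rewrite !inE Phi_eq //= => /andP[b0 /eqP E] ->.
  by apply/(fiber_cond _ _ y0); exists b.
case/(fiber_cond _ _ y0) => b' b'0 E; exists (i, b') => //.
by rewrite !inE Phi_eq //= b'0 E eqxx.
Qed.

Lemma orbit_card_Phi c : c \in C -> c != 0 -> (#|Phi c @: A| * gg = N0 * q1)%N.
Proof.
move=> cC c0; rewrite -card_A; symmetry; rewrite -sum1_card.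
rewrite (partition_big (Phi c) (mem (Phi c @: A))) /=; last first.
  by move=> x xA; apply: imset_f.
rewrite -sum_nat_const; apply: eq_bigr => v /imsetP [y yA ->].
rewrite sum1dep_card -(fiber_card cC c0 yA); apply: eq_card => x; rewrite !inE.
by [].
Qed.

Lemma rho_scale (b : F) (x : 'rV[F]_n) : rho l (b *: x) = b *: rho l x.
Proof. by apply/rowP => i; rewrite !mxE mulrCA. Qed.

Lemma iter_scale j (b : F) (x : 'rV[F]_n) : iter j (rho l) (b *: x) = b *: iter j (rho l) x.
Proof. by elim: j => //= j ->; rewrite rho_scale. Qed.

Let Gr := rhoM_group n lam.

Definition Sset : {set {perm 'rV[F]_n}} :=
  [set p : {perm 'rV[F]_n} | `[< exists j (b : F), b != 0 /\ forall x, p x = iter j (rho l) (b *: x) >] ].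

Lemma Sset_group : group_set Sset.
Proof.
apply/group_setP; split.
  rewrite inE; apply/asboolP; exists 0%N, 1; split; first exact: oner_neq0.
  by move=> x; rewrite perm1 scale1r.
move=> p1 p2; rewrite !inE => /asboolP [j1 [b1 [b10 E1]]] /asboolP [j2 [b2 [b20 E2]]].
apply/asboolP; exists (j2 + j1)%N, (b2 * b1); split; first by rewrite mulf_neq0.
move=> x; rewrite permM E1 E2 iterD -scalerA -iter_scale.
by [].
Qed.

Lemma G_sub : Gr \subset Group Sset_group.
Proof.
rewrite gen_subG; apply/subsetP => p; rewrite !inE => /orP [/eqP ->|].
  apply/asboolP; exists 1%N, 1; split; first exact: oner_neq0.
  by move=> x; rewrite permE scale1r.
case/imsetP => b _ ->; apply/asboolP; exists 0%N, (val b); split.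
  by rewrite -unitfE; exact: (valP b).
by move=> x; rewrite permE.
Qed.

Lemma G_form (p : {perm 'rV[F]_n}) : p \in Gr -> exists j (b : F), b != 0 /\ forall x, p x = iter j (rho l) (b *: x).
Proof. by move/(subsetP G_sub); rewrite inE => /asboolP. Qed.

Lemma G_mem j (b : F) : b != 0 -> exists2 p : {perm 'rV[F]_n}, p \in Gr & forall x, p x = iter j (rho l) (b *: x).
Proof.
move=> b0; exists (sigma_perm n (finField_unit b0) * rho_perm n lam ^+ j)%g.
  apply: groupM; first by apply: mem_gen; apply/setU1r; apply: imset_f.
  by apply: groupX; apply: mem_gen; apply: setU11.
move=> x; rewrite permM permX permE; exact: eq_iter (permE _) _ _.
Qed.

Lemma orbitE (c d : 'rV[F]_n) : d \in orbit 'P Gr c <->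
  exists (j : nat) (b : F), b != 0 /\ iter j (rho l) (b *: c) = d.
Proof.
split.
  case/orbitP => p pG <-; have [j [b [b0 E]]] := G_form pG.
  by exists j, b; split => //; rewrite /= ?apermE E.
case=> j [b [b0 <-]]; have [p pG E] := G_mem j b0.
by apply/orbitP; exists p => //=; rewrite ?apermE E.
Qed.

Let Cs := C :\ 0.

Lemma card_Cs : #|Cs| = (q ^ k - 1)%N.
Proof. by rewrite -card_C (cardsD1 0 C) C0 add1n subn1. Qed.

Lemma thN0 : th ^+ N0 = 1.
Proof. by rewrite /th -exprM mulnC exprM zN0 expr1n. Qed.

Lemma orbit_Phi c : c \in Cs -> orbit 'P Gr c = Phi c @: A.
Proof.
rewrite in_setD1 => /andP [c0 cC]; apply/setP => d; apply/idP/imsetP.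
  case/orbitE => j [b [b0 <-]].
  exists (Ordinal (ltn_pmod j N0_gt0), b); first by rewrite inE.
  apply: ev_inj; rewrite ?C_iter // /Phi /= !ev_iter.
  by rewrite -(expr_mod _ thN0).
case=> -[j b]; rewrite inE /= => b0 ->; apply/orbitE; exists j, b; split => //.
Qed.

Lemma rho0 : rho l 0 = 0 :> 'rV[F]_n.
Proof. by apply/rowP => i; rewrite !mxE mulr0. Qed.

Lemma Gpres (p : {perm 'rV[F]_n}) x : p \in Gr -> x \in Cs -> p x \in Cs.
Proof.
move=> pG; have [j [b [b0 E]]] := G_form pG.
rewrite !in_setD1 => /andP [x0 xC]; rewrite E C_iter // andbT.
apply: contra x0 => /eqP px0; apply/eqP; apply: (@perm_inj _ p).
rewrite !E px0 scaler0; elim: j {E px0} => //= j <-; by rewrite rho0.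
Qed.

Lemma acts_Cs : [acts Gr, on Cs | 'P].
Proof.
apply/actsP => p pG x /=; rewrite apermE; apply/idP/idP; last exact: Gpres.
move=> px; rewrite -(permK p x); apply: Gpres => //; exact: groupVr.
Qed.

Lemma count_orbits : (#|Cs| * gg = #|orbit 'P Gr @: Cs| * (N0 * q1))%N.
Proof.
rewrite (card_partition (orbit_partition acts_Cs)) big_distrl /= -sum_nat_const.
apply: eq_bigr => o /imsetP [c cCs ->].
by rewrite orbit_Phi // orbit_card_Phi //; move: cCs; rewrite in_setD1 => /andP[].
Qed.

Lemma wt_scale (b : F) (c : 'rV[F]_n) : b != 0 -> wt (b *: c) = wt c.
Proof.
by move=> b0; apply: eq_card => i; rewrite !inE mxE mulf_eq0 negb_or b0.
Qed.

Lemma wt_rho (c : 'rV[F]_n) : wt (rho l c) = wt c.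
Proof.
rewrite /wt -[in RHS](card_preimset _ (@ord_pred_inj n)); apply: eq_card => i.
rewrite !inE mxE mulf_eq0 negb_or; case: ifP => _.
  by rewrite l_neq0.
by rewrite oner_neq0.
Qed.

Lemma wt_orbit c d : d \in orbit 'P Gr c -> wt d = wt c.
Proof.
case/orbitE => j [b [b0 <-]]; elim: j => /= [|j IH]; first exact: wt_scale.
by rewrite wt_rho.
Qed.

Let O := orbit 'P Gr @: Cs.
Definition wO (o : {set 'rV[F]_n}) := wt (odflt 0 [pick x in o]).

Lemma wO_orbit c : wO (orbit 'P Gr c) = wt c.
Proof.
rewrite /wO; case: pickP => [x xo|none] /=; first exact: wt_orbit.
by have := none c; rewrite orbit_refl.
Qed.

Lemma mem_weights : [seq wt c | c <- enum Cs] =i [seq wO o | o <- enum O].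
Proof.
move=> y; apply/mapP/mapP.
  case=> c; rewrite mem_enum => cC ->; exists (orbit 'P Gr c); last by rewrite wO_orbit.
  by rewrite mem_enum; apply: imset_f.
case=> o; rewrite mem_enum => /imsetP [c cC ->] ->; exists c; last by rewrite wO_orbit.
by rewrite mem_enum.
Qed.

Lemma nweights_eq : size (undup [seq wt c | c <- enum Cs]) = size (undup [seq wO o | o <- enum O]).
Proof. exact/perm_size/perm_undup/mem_weights. Qed.

Lemma uniq_map_inj (T1 T2 : eqType) (h : T1 -> T2) (s : seq T1) :
  uniq (map h s) -> {in s &, injective h}.
Proof.
move=> U x y xs ys hxy; move/(uniqP (h x)): U => U.
rewrite -(nth_index x xs) -(nth_index x ys); congr nth.
apply: U; rewrite ?inE ?size_map ?index_mem //.
by rewrite !(nth_map x) ?index_mem // !nth_index.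
Qed.

Lemma main_sec :
  [/\ (#|O|)%:Q = ((q ^ k - 1) * gcdn ((q - 1) * (1 + t * alpha)) (t * n))%N%:Q
              / ((q - 1) * t * n)%N%:Q,
      (size (undup [seq wt c | c <- enum Cs]) <= #|O|)%N &
      (size (undup [seq wt c | c <- enum Cs]) = #|O| <->
        (forall c1 c2, c1 \in Cs -> c2 \in Cs -> wt c1 = wt c2 ->
          exists (j : nat) (b : F), b != 0 /\ iter j (rho (val lam)) (b *: c1) = c2))].
Proof.
have sO : size [seq wO o | o <- enum O] = #|O| by rewrite size_map cardE.
split.
- have E : ((q ^ k - 1) * gcdn ((q - 1) * (1 + t * alpha)) (t * n) =
            #|O| * ((q - 1) * t * n))%N.
    have := count_orbits; rewrite card_Cs /gg /w /q1 -subn1 /N0 /u => ->.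
    by rewrite [(t * n * _)%N]mulnC !mulnA.
  rewrite E PoszM intrM mulfK // intr_eq0.
  rewrite -lt0n !muln_gt0 t0 n0 !andbT.
  by rewrite subn_gt0 finNzRing_gt1.
- by rewrite nweights_eq -sO size_undup.
rewrite nweights_eq -sO.
have U : size (undup [seq wO o | o <- enum O]) = size [seq wO o | o <- enum O] <->
         {in O &, injective wO}.
  split.
    move=> H; have : uniq [seq wO o | o <- enum O].
      by apply: contraLR isT; rewrite -ltn_size_undup H ltnn.
    move/uniq_map_inj => I o1 o2 o1O o2O; apply: I; rewrite mem_enum //.
  move=> I; rewrite undup_id // map_inj_in_uniq ?enum_uniq //.
  by move=> o1 o2; rewrite !mem_enum; apply: I.
rewrite U; split.
  move=> I c1 c2 c1C c2C ew.
  have : orbit 'P Gr c1 = orbit 'P Gr c2.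
    by apply: I; rewrite ?imset_f // !wO_orbit.
  move=> Eo; have : c2 \in orbit 'P Gr c1 by rewrite Eo orbit_refl.
  by move/orbitE.
move=> H o1 o2 /imsetP [c1 c1C ->] /imsetP [c2 c2C ->]; rewrite !wO_orbit => ew.
have [j [b [b0 E]]] := H c1 c2 c1C c2C ew.
apply/orbit_eqP; rewrite orbit_sym; apply/orbitE; exists j, b; split => //.
Qed.
End Main.

Unset Implicit Arguments.
Unset Strict Implicit.

Theorem lemma5 (F : finFieldType) (n t : nat) (lam : {unit F}) (alpha : nat)
    (L : fieldExtType F) (zeta : L) (g : {poly F}) :
  (0 < n)%N -> coprime n #|F| ->
  (0 < t)%N -> t.-primitive_root (val lam) ->
  (t * n)%N.-primitive_root zeta -> zeta ^+ n = (val lam)%:A ->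
  (alpha < n)%N ->
  (forall beta, (beta < alpha)%N ->
     ~~ in_cyc (t * n) #|F| (1 + t * alpha) ((1 + t * beta) %% (t * n))) ->
  map_poly (in_alg L) g = gen_poly_L n zeta (val lam) (t * n) #|F| (1 + t * alpha) ->
  let q := #|F| in
  let k := #|cyc_coset (t * n) q (1 + t * alpha)| in
  let C := ideal_gen n (val lam) g in
  let Cs := C :\ 0 in
  let N := #|orbit 'P (rhoM_group n lam) @: Cs| in
  let nweights := size (undup [seq wt c | c <- enum Cs]) in
  [/\ N%:Q = ((q ^ k - 1) * gcdn ((q - 1) * (1 + t * alpha)) (t * n))%N%:Q
              / ((q - 1) * t * n)%N%:Q,
      (nweights <= N)%N &
      (nweights = N <->
        (forall c1 c2, c1 \in Cs -> c2 \in Cs -> wt c1 = wt c2 ->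
          exists (j : nat) (b : F), b != 0 /\ iter j (rho (val lam)) (b *: c1) = c2))].
Proof.
move=> n0 _ t0 lprim zprim zn _ _ gdef q k C Cs N nweights.
exact: (main_sec n0 t0 lprim zprim zn gdef).
Qed.
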